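(* Let $G$ be a $(3,4)$-biregular $X,Y$-bigraph (multiple edges allowed) in which every vertex of $X$ has degree 3 and every vertex of $Y$ has degree 4, and let $P$ be a proper path-factor of $G$. Let $Q=G-E(P)$. Let $G_P$ be the graph whose vertex set is $\{x\in X : d_P(x)=2\}$, in which $x_i$ and $x_j$ are adjacent whenever (a) $x_i$ and $x_j$ are vertices of degree 2 in one component of $P$ that is a path of length 6, or (b) $x_i$ and $x_j$ are vertices of degree 2 at distance 4 in one component of $P$ that is a path of length 8, or (c) $x_i$ and $x_j$ are the vertices of degree 1 of one component of $Q$. Then $G_P$ is bipartite.
   Context: Graphs may have multiple edges. An $X,Y$-bigraph is a bipartite graph with partite sets $X$ and $Y$. A $(3,4)$-biregular bigraph is a bipartite graph in which every vertex of one part has degree 3 and every vertex of the other part has degree 4. A proper path-factor of a $(3,4)$-biregular $X,Y$-bigraph $G$ (with $X$ the degree-3 side) is a spanning subgraph of $G$ each of whose components is a path whose two endpoints lie in $X$ and whose length (number of edges) lies in $\{2,4,6,8\}$. $d_H(v)$ denotes the degree of $v$ in $H$. *)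

(* Defs.v *)
(* Multigraph X,Y-bigraph: edges are elements of a finType E,
   each edge e joining ex e \in X and ey e \in Y (parallel edges allowed). *)
From mathcomp Require Import all_boot.
Set Implicit Arguments. Unset Strict Implicit. Unset Printing Implicit Defensive.

Section Bigraph.
Variables (X Y E : finType) (ex : E -> X) (ey : E -> Y).

Definition vtx := (X + Y)%type.
Definition isX (v : vtx) : bool := if v is inl _ then true else false.

Definition incident (e : E) (v : vtx) : bool :=
  (v == inl (ex e)) || (v == inr (ey e)).

Definition degS (S : {set E}) (v : vtx) : nat := #|[set e in S | incident e v]|.

Definition adjS (S : {set E}) : rel vtx :=
  fun u v => (u != v) && [exists e in S, incident e u && incident e v].

Definition comp (S : {set E}) (v : vtx) : {set vtx} := [set u | connect (adjS S) v u].

Fixpoint walk (S : {set E}) (v : vtx) (vs : seq vtx) (es : seq E) : bool :=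
  match vs, es with
  | [::], [::] => true
  | w :: vs', e :: es' => [&& e \in S, incident e v, incident e w & walk S w vs' es']
  | _, _ => false
  end.

(* The component with vertex set C of (V(G), S) is the path with vertex
   sequence vs and edge sequence es (its length is size es). *)
Definition is_path_comp (S : {set E}) (C : {set vtx}) (vs : seq vtx) (es : seq E) : Prop :=
  match vs with
  | [::] => False
  | v0 :: vs' =>
      [/\ walk S v0 vs' es, uniq vs, uniq es,
          C = [set u in vs] &
          [set e in S | [exists u in C, incident e u]] = [set e in es]]
  end.

Definition biregular34 : Prop :=
  (forall x : X, #|[set e | ex e == x]| = 3) /\
  (forall y : Y, #|[set e | ey e == y]| = 4).

Definition proper_path_factor (P : {set E}) : Prop :=
  forall v : vtx, exists (vs : seq vtx) (es : seq E),
    [/\ is_path_comp P (comp P v) vs es, size es \in [:: 2; 4; 6; 8],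
        isX (head v vs) & isX (last v vs)].

Definition GP_adj (P : {set E}) (x1 x2 : X) : Prop :=
  let Q := ~: P in
  [/\ x1 != x2, degS P (inl x1) = 2, degS P (inl x2) = 2 &
    [\/
        (exists vs es, [/\ is_path_comp P (comp P (inl x1)) vs es, size es = 6 &
                           inl x2 \in comp P (inl x1)]),
        (exists vs es (i j : nat),
           [/\ is_path_comp P (comp P (inl x1)) vs es, size es = 8,
               (i < size vs) && (j < size vs),
               nth (inl x1) vs i = inl x1 /\ nth (inl x1) vs j = inl x2 &
               (i = j + 4 \/ j = i + 4)]) |
        [/\ inl x2 \in comp Q (inl x1), degS Q (inl x1) = 1 & degS Q (inl x2) = 1]]].

(* a graph on X (restricted to the vertices of G_P) is bipartite iff 2-colourable *)
Definition GP_bipartite (P : {set E}) : Prop :=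
  exists c : X -> bool, forall x1 x2 : X, GP_adj P x1 x2 -> c x1 != c x2.

End Bigraph.

(* Main.v *)
Require Import Defs.
From mathcomp Require Import all_boot zify.
Set Implicit Arguments. Unset Strict Implicit. Unset Printing Implicit Defensive.

Section Color.
Variables (T : finType) (f1 f2 : T -> T).
Hypotheses (i1 : involutive f1) (i2 : involutive f2).

Let g := fun x => f2 (f1 x).

Lemma g_inj : injective g.
Proof. by move=> x y; rewrite /g => /(inv_inj i2) /(inv_inj i1). Qed.

Lemma iter_inj n : injective (iter n g).
Proof. elim: n => [//|n IH] x y /=. by move/g_inj/IH. Qed.

Lemma gfg y : g (f1 (g y)) = f1 y.
Proof. by rewrite /g i1 i2. Qed.

Lemma gfg_iter s y : iter s g (f1 (iter s g y)) = f1 y.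
Proof.
elim: s y => [//|s IH] y.
by rewrite iterSr iterS gfg IH.
Qed.

Definition goodS (S : {set T}) (c : T -> bool) :=
  forall x, x \in S ->
    (f1 x \in S -> f1 x != x -> c (f1 x) != c x) /\
    (f2 x \in S -> f2 x != x -> c (f2 x) != c x).

Lemma hard_case (S : {set T}) :
  (forall v, v \in S -> [&& f1 v \in S, f1 v != v, f2 v \in S & f2 v != v]) ->
  exists c, goodS S c.
Proof.
move=> hS.
have gS : forall n v, v \in S -> iter n g v \in S.
  elim=> [//|n IH] v vS /=; have := hS _ (IH _ vS).
  by case/and4P => H1 _ H2 _; have := hS _ H1; case/and4P.
have key : forall x, x \in S -> ~~ fconnect g x (f1 x).
  move=> x xS; apply/negP => /iter_findex; move: (findex _ _ _) => m Hm.
  have [s Em] : exists s, m = s.*2 + odd m.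
    by exists m./2; rewrite addnC odd_double_half.
  move: Em; case: (odd m) => /= Em.
  - have H1 : f1 (iter s.+1 g x) = iter s g x.
      apply: (@iter_inj s.+1 (f1 (iter s.+1 g x)) (iter s g x)).
      rewrite gfg_iter -Hm -iterD; congr iter; lia.
    have : f2 (iter s.+1 g x) = iter s.+1 g x.
      rewrite {1}iterS; change (f2 (f2 (f1 (iter s g x))) = iter s.+1 g x).
      by rewrite i2 -H1 i1.
    by have := hS _ (gS s.+1 _ xS); case/and4P => _ _ _ /eqP.
  - have H1 : f1 (iter s g x) = iter s g x.
      apply: (@iter_inj s (f1 (iter s g x)) (iter s g x)).
      rewrite gfg_iter -Hm -iterD; congr iter; lia.
    by have := hS _ (gS s _ xS); case/and4P => _ /eqP.
pose r x := enum_rank (froot g x).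
have symg := fconnect_sym g_inj.
have rE : forall x y, (r x == r y) = fconnect g x y.
  by move=> x y; rewrite /r (inj_eq enum_rank_inj) (root_connect symg).
exists (fun x => r x < r (f1 x)) => x xS.
have ne : r x != r (f1 x) by rewrite rE key.
have A : r (f1 x) < r (f1 (f1 x)) != (r x < r (f1 x)).
  rewrite i1; move: ne; rewrite neq_ltn; case/orP => H.
  - by rewrite H ltnNge ltnW.
  - by rewrite H ltnNge ltnW.
split => // _ _.
have e1 : r (f2 x) = r (f1 x).
  apply/eqP; rewrite rE symg.
  have -> : f2 x = g (f1 x) by rewrite /g i1.
  exact: fconnect1.
have e2 : r (f1 (f2 x)) = r x.
  apply/eqP; rewrite rE; have E : g (f1 (f2 x)) = x by rewrite /g i1 i2.
  rewrite -{2}E.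
  exact: fconnect1.
by rewrite e1 e2; rewrite i1 in A.
Qed.

Lemma colorS n (S : {set T}) : #|S| <= n -> exists c, goodS S c.
Proof.
elim: n S => [|n IH] S hS.
  exists (fun _ => true) => x; move: hS; rewrite leqn0 cards_eq0 => /eqP ->.
  by rewrite inE.
have [hard|] := boolP [forall v in S, [&& f1 v \in S, f1 v != v, f2 v \in S & f2 v != v]].
  by apply: hard_case => v vS; move/forall_inP: hard; apply.
rewrite negb_forall_in => /existsP [v /andP [vS ev]].
have [c' Hc'] : exists c', goodS (S :\ v) c'.
  apply: IH; move: hS; rewrite (cardsD1 v S) vS /=; lia.
pose b1 := (f1 v \in S) && (f1 v != v).
pose b2 := (f2 v \in S) && (f2 v != v).
have nb : ~~ (b1 && b2) by move: ev; rewrite /b1 /b2; case: (f1 v \in S); case: (f1 v != v); case: (f2 v \in S); case: (f2 v != v).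
exists (fun x => if x == v then (if b1 then ~~ c' (f1 v) else if b2 then ~~ c' (f2 v) else true) else c' x).
move=> x xS /=; case: (eqVneq x v) => [->|xv].
  split => H1 H2; rewrite (negbTE H2).
  - have b1T : b1 by rewrite /b1 H1 H2.
    by rewrite b1T; case: (c' _).
  - have b2T : b2 by rewrite /b2 H1 H2.
    have b1F : b1 = false by move: nb; rewrite b2T andbT => /negbTE.
    by rewrite b1F b2T; case: (c' _).
have xS' : x \in S :\ v by rewrite !inE xv.
have [Hc1 Hc2] := Hc' x xS'.
split => H1 H2.
- case: (eqVneq (f1 x) v) => [E|ne].
    have Ex : f1 v = x by rewrite -E i1.
    have b1T : b1 by rewrite /b1 Ex xS xv.
    by rewrite b1T Ex; case: (c' _).
  apply: Hc1 H2; by rewrite !inE ne.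
- case: (eqVneq (f2 x) v) => [E|ne].
    have Ex : f2 v = x by rewrite -E i2.
    have b2T : b2 by rewrite /b2 Ex xS xv.
    have b1F : b1 = false by move: nb; rewrite b2T andbT => /negbTE.
    by rewrite b1F b2T Ex; case: (c' _).
  apply: Hc2 H2; by rewrite !inE ne.
Qed.

Lemma color2 : exists c : T -> bool, forall x,
  (f1 x != x -> c (f1 x) != c x) /\ (f2 x != x -> c (f2 x) != c x).
Proof.
have [c Hc] := @colorS #|[set: T]| [set: T] (leqnn _).
exists c => x; have [H1 H2] := Hc x (in_setT x).
by split => H; [apply: H1 | apply: H2]; rewrite ?in_setT.
Qed.
End Color.


Section G.
Variables (X Y E : finType) (ex : E -> X) (ey : E -> Y).
Local Notation vtx := (vtx X Y).
Local Notation incident := (incident ex ey).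
Local Notation adjS := (adjS ex ey).
Local Notation degS := (degS ex ey).
Local Notation comp := (Defs.comp ex ey).
Local Notation walk := (walk ex ey).

Lemma edge3 e (a b c : vtx) : incident e a -> incident e b -> incident e c ->
  [|| a == b, a == c | b == c].
Proof.
by rewrite /Defs.incident; do 3 case/orP => /eqP ->; rewrite ?eqxx ?orbT.
Qed.

Lemma edge_side e (a b : vtx) : incident e a -> incident e b -> a != b -> isX a != isX b.
Proof.
by rewrite /Defs.incident; do 2 case/orP => /eqP ->; rewrite ?eqxx.
Qed.

Lemma adjS_sym S : symmetric (adjS S).
Proof.
move=> u v; rewrite /Defs.adjS eq_sym; congr (_ && _).
by apply: eq_existsb => e; rewrite (andbC (incident e u)).
Qed.

Lemma adjS_ex S u v : adjS S u v -> u != v /\ exists e, [/\ e \in S, incident e u & incident e v].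
Proof.
by case/andP => uv /existsP [e /and3P [eS eu ev]]; split => //; exists e.
Qed.

Lemma card_ge2 (A : {set E}) a b : a \in A -> b \in A -> a != b -> 1 < #|A|.
Proof.
move=> aA bA ab; apply: (@leq_trans #|[set a; b]|); first by rewrite cards2 ab.
by apply: subset_leq_card; apply/subsetP => e; rewrite !inE => /orP [] /eqP ->.
Qed.

Lemma deg_ge2 S v a b : adjS S v a -> adjS S v b -> a != b -> 1 < degS S v.
Proof.
move=> /adjS_ex [va [ea [eaS eav eaa]]] /adjS_ex [vb [eb [ebS ebv ebb]]] ab.
apply: (@card_ge2 _ ea eb); rewrite ?inE ?eaS ?ebS ?eav ?ebv //.
apply/eqP => E1; subst eb.
by have := edge3 eav eaa ebb; rewrite (negbTE va) (negbTE vb) (negbTE ab).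
Qed.

Lemma nbr_le1 S v a b : degS S v <= 1 -> adjS S v a -> adjS S v b -> a = b.
Proof.
move=> d va vb; apply/eqP; apply/negP => /negP ab.
by have := deg_ge2 va vb ab; rewrite ltnNge d.
Qed.

Lemma nbr_le2 S v a b c : degS S v <= 2 -> adjS S v a -> adjS S v b -> adjS S v c ->
  a != b -> c = a \/ c = b.
Proof.
move=> d va vb vc ab.
case: (eqVneq c a) => [->|ca]; first by left.
case: (eqVneq c b) => [->|cb]; first by right.
exfalso.
move: va vb vc => /adjS_ex [va [ea [eaS eav eaa]]] /adjS_ex [vb [eb [ebS ebv ebb]]]
   /adjS_ex [vc [ec [ecS ecv ecc]]].
have n1 : ea != eb.
  apply/eqP => E1; subst eb.
  by have := edge3 eav eaa ebb; rewrite (negbTE va) (negbTE vb) (negbTE ab).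
have n2 : ea != ec.
  apply/eqP => E1; subst ec.
  by have := edge3 eav eaa ecc; rewrite (negbTE va) (negbTE vc) eq_sym (negbTE ca).
have n3 : eb != ec.
  apply/eqP => E1; subst ec.
  by have := edge3 ebv ebb ecc; rewrite (negbTE vb) (negbTE vc) eq_sym (negbTE cb).
have : #|ea |: [set eb; ec]| <= degS S v.
  apply: subset_leq_card; apply/subsetP => e; rewrite !inE.
  by case/or3P => /eqP ->; rewrite ?eaS ?ebS ?ecS ?eav ?ebv ?ecv.
rewrite cardsU1 cards2 !inE n3 negb_or n1 n2 /= => H; by have := leq_trans H d.
Qed.

Lemma PL S (p q : seq vtx) (x : vtx) :
  (forall v, degS S v <= 2) ->
  path (adjS S) x p -> path (adjS S) x q -> uniq (x :: p) -> uniq (x :: q) ->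
  (degS S x <= 1 \/ exists2 y, adjS S x y & y \notin p ++ q) ->
  exists r, q = p ++ r \/ p = q ++ r.
Proof.
move=> d2; elim: p q x => [|a p IH] q x; first by exists q; left.
case: q => [|b q]; first by exists (a :: p); right.
move=> /= /andP [xa pa] /andP [xb qb] /andP [xap up] /andP [xbq uq] hx.
have ab : a = b.
  case: hx => [d1|[y xy]]; first exact: nbr_le1 d1 xa xb.
  move=> Hy.
  have ya : y != a by apply: contraNneq Hy => ->; rewrite !inE eqxx.
  have yb : y != b by apply: contraNneq Hy => ->; rewrite /= inE mem_cat !inE eqxx !orbT.
  have [E1|//] := nbr_le2 (d2 x) xy xa xb ya.
  by rewrite E1 eqxx in yb.
subst b.
have hx' : degS S a <= 1 \/ exists2 y, adjS S a y & y \notin p ++ q.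
  right; exists x; first by rewrite adjS_sym.
  by rewrite mem_cat negb_or; move: xap xbq; rewrite !inE !negb_or => /andP [_ ->] /andP [_ ->].
have [r [->|->]] := IH q a pa qb up uq hx'; first by exists r; left.
by exists r; right.
Qed.

Lemma comp_refl S v : v \in comp S v.
Proof. by rewrite /Defs.comp inE connect0. Qed.

Lemma comp_sym S u v : u \in comp S v -> v \in comp S u.
Proof.
by rewrite /Defs.comp !inE (sym_connect_sym (adjS_sym S)).
Qed.

Lemma comp_eq S u v : u \in comp S v -> comp S u = comp S v.
Proof.
move=> uv; apply/setP => w; rewrite /Defs.comp !inE.
move: uv; rewrite /Defs.comp inE => uv.
apply/idP/idP => H; first exact: connect_trans uv H.
by rewrite (sym_connect_sym (adjS_sym S)) in uv; exact: connect_trans uv H.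
Qed.

Lemma interior_deg S (u : vtx) p r :
  path (adjS S) u (p ++ r) -> uniq (u :: p ++ r) -> last u p != u -> r != [::] ->
  1 < degS S (last u p).
Proof.
case/lastP: p => [|p z]; first by rewrite eqxx.
case: r => [//|h r] pa un _ _.
rewrite last_rcons; rewrite cat_rcons in pa un.
move: pa; rewrite cat_path /= => /and3P [_ az /andP [zh _]].
apply: (deg_ge2 (a := last u p) (b := h)); [by rewrite adjS_sym | done | ].
apply/negP => /eqP E1.
move: un; rewrite -cat_cons cat_uniq => /and3P [_ /hasP H _]; apply: H.
exists h; first by rewrite !inE eqxx orbT.
by rewrite /= -E1 mem_last.
Qed.

Lemma Q_unique S (u w w' : vtx) : (forall v, degS S v <= 2) -> degS S u <= 1 ->
  w \in comp S u -> w' \in comp S u -> degS S w = 1 -> degS S w' = 1 ->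
  w != u -> w' != u -> w = w'.
Proof.
move=> d2 du; rewrite /Defs.comp !inE => /connectP [p0 pp0 ->] /connectP [q0 pq0 ->].
case/shortenP: pp0 => p pp up _.
case/shortenP: pq0 => q pq uq _.
move=> dw dw' nw nw'.
have [r [Eq|Ep]] := PL d2 pp pq up uq (or_introl du).
- case: (eqVneq r [::]) => [r0|rn]; first by rewrite Eq r0 cats0.
  rewrite Eq in pq uq.
  by have := interior_deg pq uq nw rn; rewrite dw.
- case: (eqVneq r [::]) => [r0|rn]; first by rewrite Ep r0 cats0.
  rewrite Ep in pp up.
  by have := interior_deg pp up nw' rn; rewrite dw'.
Qed.
End G.


Section W.
Variables (X Y E : finType) (ex : E -> X) (ey : E -> Y).
Local Notation vtx := (vtx X Y).
Local Notation incident := (incident ex ey).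
Local Notation adjS := (adjS ex ey).
Local Notation degS := (degS ex ey).
Local Notation comp := (Defs.comp ex ey).
Local Notation walk := (walk ex ey).
Local Notation is_path_comp := (is_path_comp ex ey).

Lemma walk_nth S v vs es : walk S v vs es ->
  size vs = size es /\ forall j d e0, j < size es ->
  [/\ nth e0 es j \in S, incident (nth e0 es j) (nth d (v :: vs) j)
    & incident (nth e0 es j) (nth d (v :: vs) j.+1)].
Proof.
elim: vs v es => [|w vs IH] v [|e es] //=.
case/and4P => eS ev ew /IH [sz H]; split; first by rewrite sz.
by case=> [|j] d e0 //= /H.
Qed.

Section PC.
Variables (S : {set E}) (C : {set vtx}) (vs : seq vtx) (es : seq E).
Hypothesis pc : is_path_comp S C vs es.

Ltac slia := repeat match goal with
  | H : is_true (_ < _) |- _ => revert H | H : is_true (_ <= _) |- _ => revert H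
  | H : (_ = _ :> nat) |- _ => revert H | H : is_true (_ != _ :> nat) |- _ => revert H end;
  (try set n1 := size vs); (try set n2 := size es); lia.

Lemma pc_size : size vs = (size es).+1.
Proof. by case: vs pc => [//|v vs'] [/walk_nth [sz _]] /=; rewrite sz. Qed.

Lemma pc_edge j d e0 : j < size es ->
  [/\ nth e0 es j \in S, incident (nth e0 es j) (nth d vs j)
    & incident (nth e0 es j) (nth d vs j.+1)].
Proof. by case: vs pc => [//|v vs'] [/walk_nth [_ H] _ _ _ _]; apply: H. Qed.

Lemma pc_uniq : uniq vs.
Proof. by case: vs pc => [//|v vs'] [_ u _ _ _]. Qed.

Lemma pc_uniqe : uniq es.
Proof. by case: vs pc => [//|v vs'] [_ _ u _ _]. Qed.

Lemma pc_C : C = [set u in vs].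
Proof. by case: vs pc => [//|v vs'] [_ _ _ c _]. Qed.

Lemma pc_E : [set e in S | [exists u in C, incident e u]] = [set e in es].
Proof. by case: vs pc => [//|v vs'] [_ _ _ _ c]. Qed.

Lemma pc_neq i j d : i < size vs -> j < size vs -> i != j -> nth d vs i != nth d vs j.
Proof. by move=> hi hj; rewrite (nth_uniq d hi hj pc_uniq). Qed.

Lemma pc_mem u : u \in C -> exists2 i, i < size vs & u = nth u vs i.
Proof.
rewrite pc_C inE => uv; exists (index u vs); first by rewrite index_mem.
by rewrite nth_index.
Qed.

Lemma pc_card : #|C| = size vs.
Proof.
rewrite pc_C; have /card_uniqP <- := pc_uniq.
by apply: eq_card => u; rewrite inE.
Qed.

Lemma pc_edge_idx e i d e0 : e \in S -> i < size vs -> incident e (nth d vs i) ->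
  (i < size es /\ e = nth e0 es i) \/ (0 < i /\ e = nth e0 es i.-1).
Proof.
move=> eS hi inc.
have : e \in [set e in es].
  rewrite -pc_E inE eS; apply/existsP; exists (nth d vs i).
  by rewrite inc pc_C inE mem_nth.
rewrite inE => ees.
have hj : index e es < size es by rewrite index_mem.
have Ee := nth_index e0 ees.
have [_ i1 i2] := pc_edge d e0 hj.
rewrite Ee in i1 i2.
have szv := pc_size.
have := edge3 i1 i2 inc; case/or3P => /eqP E1.
- by have := pc_neq d (i := index e es) (j := (index e es).+1) (ltac:(lia)) (ltac:(lia)) (ltac:(lia)); rewrite E1 eqxx.
- have : index e es = i.
    apply/eqP; rewrite -(nth_uniq d _ hi pc_uniq) ?E1 // szv; lia.
  by move=> Ei; left; rewrite -Ei; split.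
- have : (index e es).+1 = i.
    apply/eqP; rewrite -(nth_uniq d _ hi pc_uniq) ?E1 // szv; lia.
  by move=> Ei; right; rewrite -Ei; split.
Qed.

Lemma pc_adj i d : i < size es -> adjS S (nth d vs i) (nth d vs i.+1).
Proof.
move=> hi; have [e0 _] : exists e0 : E, True by case: (es) hi => [//|e _] _; exists e.
have [eS a b] := pc_edge d e0 hi.
have szv := pc_size.
rewrite /Defs.adjS pc_neq /=; try lia.
by apply/existsP; exists (nth e0 es i); rewrite eS a b.
Qed.

Lemma pc_deg_end i d : (i == 0) || (i == size es) -> degS S (nth d vs i) <= 1.
Proof.
move=> hi; have szv := pc_size.
have hi' : i < size vs by rewrite szv; case/orP: hi => /eqP ->; lia.
apply/card_le1_eqP => e e'; rewrite !inE => /andP [eS ei] /andP [e'S e'i].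
have := pc_edge_idx e eS hi' ei; have := pc_edge_idx e e'S hi' e'i.
move=> H1 H2.
case/orP: hi => /eqP Ei; subst i.
- case: H1 => [[h1 ->]|[hh _]]; last by lia.
  case: H2 => [[h2 ->]|[hh _]]; last by lia.
  by apply: set_nth_default.
- case: H1 => [[hh _]|[h1 ->]]; first by lia.
  case: H2 => [[hh _]|[h2 ->]]; first by lia.
  by apply: set_nth_default; lia.
Qed.

Lemma pc_deg_int i d : 0 < i < size es -> 1 < degS S (nth d vs i).
Proof.
move=> /andP [h0 h1]; have szv := pc_size.
have [e0 _] : exists e0 : E, True by case: (es) h1 => [//|e _] _; exists e.
have [a1 _ a2] := pc_edge d e0 (j := i.-1) (ltac:(lia)).
have [b1 b2 _] := pc_edge d e0 h1.
rewrite prednK // in a2.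
apply: (card_ge2 (a := nth e0 es i.-1) (b := nth e0 es i)); rewrite ?inE ?a1 ?a2 ?b1 ?b2 //.
rewrite nth_uniq ?pc_uniqe //. - clear -h0; lia.
- set n := size es in h1 |- *; lia.
Qed.

Lemma pc_deg_ge1 i d : 0 < size es -> i < size vs -> 0 < degS S (nth d vs i).
Proof.
move=> h0 hi; have szv := pc_size.
have [e0 _] : exists e0 : E, True by case: (es) h0 => [//|e _] _; exists e.
apply/card_gt0P.
case: (ltnP i (size es)) => h.
  have [a1 a2 _] := pc_edge d e0 h.
  by exists (nth e0 es i); rewrite inE a1 a2.
have [a1 _ a2] := pc_edge d e0 (j := i.-1) (ltac:(lia)).
rewrite prednK in a2; last by lia.
by exists (nth e0 es i.-1); rewrite inE a1 a2.
Qed.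

Lemma pc_parity i d : i < size vs ->
  isX (nth d vs i) = (if odd i then ~~ isX (nth d vs 0) else isX (nth d vs 0)).
Proof.
have szv := pc_size.
elim: i => [//|i IH] hi.
have [e0 _] : exists e0 : E, True.
  have : 0 < size es by move: hi; rewrite szv; lia.
  by case: (es) => // e _ _; exists e.
have [_ a1 a2] := pc_edge d e0 (j := i) (ltac:(lia)).
have := edge_side a1 a2 (pc_neq d (i := i) (j := i.+1) (ltac:(lia)) hi (ltac:(lia))).
rewrite IH; last by lia.
by rewrite /=; case: (odd i); case: (isX _); case: (isX _).
Qed.

Lemma pc_nbr i d u : i < size vs -> adjS S (nth d vs i) u ->
  exists2 j, j < size vs & u = nth d vs j /\ (j.+1 = i \/ j = i.+1).
Proof.
move=> hi /adjS_ex [ne [e [eS a b]]]; have szv := pc_size.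
have [[h Ee]|[h Ee]] := pc_edge_idx e eS hi a.
- have [_ c1 c2] := pc_edge d e h; rewrite -Ee in c1 c2.
  have hn : nth d vs i != nth d vs i.+1 by apply: pc_neq; slia.
  have := edge3 c1 c2 b; rewrite (negbTE ne) (negbTE hn) /= => /eqP <-.
  by exists i.+1; [slia | split => //; right].
- have hi1 : i.-1 < size es by slia.
  have [_ c1 c2] := pc_edge d e hi1; rewrite -Ee prednK // in c1 c2.
  have hn : nth d vs i.-1 != nth d vs i by apply: pc_neq; slia.
  have := edge3 c1 c2 b; rewrite (negbTE ne) orbF (negbTE hn) /= => /eqP <-.
  by exists i.-1; [slia | split => //; left; slia].
Qed.
End PC.
End W.


Section M.
Variables (X Y E : finType) (ex : E -> X) (ey : E -> Y) (P : {set E}).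
Hypothesis hb : biregular34 ex ey.
Hypothesis hp : proper_path_factor ex ey P.
Local Notation vtx := (vtx X Y).
Local Notation incident := (incident ex ey).
Local Notation adjS := (adjS ex ey).
Local Notation degS := (degS ex ey).
Local Notation comp := (Defs.comp ex ey).
Local Notation is_path_comp := (is_path_comp ex ey).

Lemma head_nth (d : vtx) vs : vs != [::] -> head d vs = nth d vs 0.
Proof. by case: vs. Qed.

Lemma degP_ge1 v : 0 < degS P v.
Proof.
have [vs [es [pc hs _ _]]] := hp v.
have [i hi Ev] := pc_mem pc (comp_refl ex ey P v).
rewrite Ev; apply: (pc_deg_ge1 pc) => //.
by move: hs; rewrite !inE; case/or4P => /eqP ->.
Qed.

Lemma degP_Y y : 1 < degS P (inr y).
Proof.
have [vs [es [pc hs h1 h2]]] := hp (inr y).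
have [i hi Ev] := pc_mem pc (comp_refl ex ey P (inr y)).
have szv := pc_size pc.
have vn : vs != [::] by case: (vs) szv.
rewrite head_nth // in h1.
rewrite -nth_last szv /= in h2.
have px := pc_parity pc (inr y) hi; rewrite -Ev h1 /= in px.
have oi : odd i by move: px; case: (odd i).
have ni : i != size es.
  by apply/eqP => Ei; subst i; rewrite -Ev in h2.
rewrite Ev; apply: (pc_deg_int pc).
move: oi ni hi; rewrite szv; case: i {Ev px} => //= i _; lia.
Qed.

Lemma deg_split v : degS (~: P) v + degS P v = #|[set e | incident e v]|.
Proof.
rewrite addnC -(cardsID P [set e | incident e v]); congr (_ + _); apply: eq_card => e;
  by rewrite !inE andbC.
Qed.

Lemma degQ_le2 v : degS (~: P) v <= 2.
Proof.
have := deg_split v; case: hb => h3 h4.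
case: v => [x|y] Hs.
- have : #|[set e | incident e (inl x)]| = 3.
    rewrite -(h3 x); apply: eq_card => e; rewrite !inE /Defs.incident /=.
    by rewrite orbF eq_sym.
  have := degP_ge1 (inl x); lia.
- have : #|[set e | incident e (inr y)]| = 4.
    rewrite -(h4 y); apply: eq_card => e; rewrite !inE /Defs.incident /=.
    by rewrite eq_sym.
  have := degP_Y y; lia.
Qed.

Lemma deg_le1_X (u : vtx) : degS P u <= 1 -> isX u.
Proof. by case: u => // y; have := degP_Y y; lia. Qed.

Definition Aa (x1 x2 : X) := exists vs es, [/\ is_path_comp P (comp P (inl x1)) vs es, size es = 6 &
                           inl x2 \in comp P (inl x1)].
Definition Ab (x1 x2 : X) := exists vs es (i j : nat),
           [/\ is_path_comp P (comp P (inl x1)) vs es, size es = 8,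
               (i < size vs) && (j < size vs),
               nth (inl x1) vs i = inl x1 /\ nth (inl x1) vs j = inl x2 &
               (i = j + 4 \/ j = i + 4)].
Definition R1 x y := [/\ x != y, degS P (inl x) = 2, degS P (inl y) = 2 & (Aa x y \/ Ab x y)].
Definition Cc (x1 x2 : X) := [/\ inl x2 \in comp (~: P) (inl x1), degS (~: P) (inl x1) = 1 &
   degS (~: P) (inl x2) = 1].
Definition R2 x y := [/\ x != y, degS P (inl x) = 2, degS P (inl y) = 2 & Cc x y].

Lemma deg2X_idx C vs es i d : is_path_comp P C vs es -> i < size vs ->
  isX (nth d vs i) -> degS P (nth d vs i) = 2 -> 0 < i < size es /\ ~~ odd i.
Proof.
move=> pc hi hx hd.
have szv := pc_size pc.
have h0 : isX (nth d vs 0) by apply: deg_le1_X; apply: (pc_deg_end pc).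
have := pc_parity pc d hi; rewrite hx h0; case: (odd i) => // _.
have n0 : i != 0 by apply/eqP => Ei; subst i; have := pc_deg_end pc d (i := 0) erefl; rewrite hd.
have nn : i != size es.
  by apply/eqP => Ei; subst i; have := pc_deg_end pc d (i := size es); rewrite eqxx orbT hd => /(_ erefl).
split => //; move: hi n0 nn; rewrite szv; lia.
Qed.

Lemma X_idx C vs es (x u : X) : is_path_comp P C vs es -> inl u \in C -> degS P (inl u) = 2 ->
  exists k, [/\ k < size vs, inl u = nth (inl x) vs k, 0 < k < size es & ~~ odd k].
Proof.
move=> pc uC du; have [k hk Ek] := pc_mem pc uC.
rewrite (set_nth_default (inl x)) // in Ek.
have [h1 h2] := deg2X_idx (d := inl x) pc hk (ltac:(by rewrite -Ek)) (ltac:(by rewrite -Ek)).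
by exists k.
Qed.

Lemma inl_inj' (a b : X) : (inl a : vtx) = inl b -> a = b.
Proof. by case. Qed.

Lemma R1_sym x y : R1 x y -> R1 y x.
Proof.
case=> ne dx dy [[vs [es [pc h6 yC]]]|[vs [es [i [j [pc h8 /andP [hi hj] [Ei Ej] hij]]]]]].
- have Ec := comp_eq yC.
  split => //; first by rewrite eq_sym.
  by left; exists vs, es; rewrite Ec; split => //; apply: comp_refl.
- have yC : inl y \in comp P (inl x) by rewrite (pc_C pc) inE -Ej mem_nth.
  have Ec := comp_eq yC.
  split => //; first by rewrite eq_sym.
  right; exists vs, es, j, i; rewrite Ec; split => //; first by rewrite hj hi.
    by rewrite !(set_nth_default (inl x)).
  by case: hij; [right|left].
Qed.

Lemma R2_sym x y : R2 x y -> R2 y x.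
Proof.
case=> ne dx dy [yC qx qy]; split => //; first by rewrite eq_sym.
by split => //; apply: comp_sym.
Qed.

Lemma R2_fun x y z : R2 x y -> R2 x z -> y = z.
Proof.
case=> ne _ _ [yC qx qy] [ne' _ _ [zC _ qz]].
apply: inl_inj'.
have nyx : (inl y : vtx) != inl x by apply/eqP => /inl_inj' E1; rewrite E1 eqxx in ne.
have nzx : (inl z : vtx) != inl x by apply/eqP => /inl_inj' E1; rewrite E1 eqxx in ne'.
have dx : degS (~: P) (inl x) <= 1 by rewrite qx.
exact: (Q_unique degQ_le2 dx yC zC qy qz nyx nzx).
Qed.

Lemma noN C vs es d a b : is_path_comp P C vs es -> size es = 8 ->
  adjS P (nth d vs 4) a -> adjS P a b -> 1 < degS P b.
Proof.
move=> pc h8 h1 h2; have szv := pc_size pc.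
have [j1 hj1 [Ea o1]] := pc_nbr (i := 4) pc (ltac:(by rewrite szv h8)) h1.
rewrite Ea in h2.
have [j2 hj2 [Eb o2]] := pc_nbr pc hj1 h2.
rewrite Eb; apply: (pc_deg_int pc); rewrite h8.
by move: o1 o2; clear; lia.
Qed.

Lemma yesN C vs es d j : is_path_comp P C vs es -> size es = 8 -> (j = 2 \/ j = 6) ->
  exists a b, [/\ adjS P (nth d vs j) a, adjS P a b & degS P b <= 1].
Proof.
move=> pc h8 [->|->].
- exists (nth d vs 1), (nth d vs 0); split.
  + by rewrite adjS_sym; apply: (pc_adj pc); rewrite h8.
  + by rewrite adjS_sym; apply: (pc_adj pc); rewrite h8.
  + by apply: (pc_deg_end pc).
- exists (nth d vs 7), (nth d vs 8); split.
  + by apply: (pc_adj pc); rewrite h8.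
  + by apply: (pc_adj pc); rewrite h8.
  + by apply: (pc_deg_end pc); rewrite h8.
Qed.

Lemma Ab_idx C vs es i j (x y : X) : is_path_comp P C vs es -> size es = 8 ->
  i < size vs -> j < size vs -> nth (inl x) vs i = inl x -> nth (inl x) vs j = inl y ->
  degS P (inl x) = 2 -> degS P (inl y) = 2 -> (i = j + 4 \/ j = i + 4) ->
  (i = 2 /\ j = 6) \/ (i = 6 /\ j = 2).
Proof.
move=> pc h8 hi hj Ei Ej dx dy hij.
have [a1 a2] := deg2X_idx (d := inl x) pc hi (ltac:(by rewrite Ei)) (ltac:(by rewrite Ei)).
have [b1 b2] := deg2X_idx (d := inl x) pc hj (ltac:(by rewrite Ej)) (ltac:(by rewrite Ej)).
rewrite h8 in a1 b1.
move: a1 a2 b1 b2 hij; clear; lia.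
Qed.

Lemma R1_fun x y z : R1 x y -> R1 x z -> y = z.
Proof.
case=> nxy dx dy Hy [nxz _ dz Hz].
have xC : inl x \in comp P (inl x) by apply: comp_refl.
case: Hy => [[vs [es [pc h6 yC]]] | [vs [es [i [j [pc h8 /andP [hi hj] [Ei Ej] hij]]]]]];
case: Hz => [[vs' [es' [pc' h6' zC]]] | [vs' [es' [i' [j' [pc' h8' /andP [hi' hj'] [Ei' Ej'] hij']]]]]].
- have [kx [_ Ekx r1 r2]] := X_idx x pc xC dx.
  have [ky [_ Eky s1 s2]] := X_idx x pc yC dy.
  have [kz [_ Ekz t1 t2]] := X_idx x pc zC dz.
  case: (eqVneq ky kz) => [E1|nk]; first by apply: inl_inj'; rewrite Eky Ekz E1.
  rewrite h6 in r1 s1 t1.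
  have : (ky = kx) \/ (kz = kx) by move: r1 r2 s1 s2 t1 t2 nk; clear; lia.
  case=> E1.
  + have : x = y by apply: inl_inj'; rewrite Ekx Eky E1.
    by move=> E2; rewrite E2 eqxx in nxy.
  + have : x = z by apply: inl_inj'; rewrite Ekx Ekz E1.
    by move=> E2; rewrite E2 eqxx in nxz.
- have := pc_card pc; rewrite (pc_card pc') (pc_size pc) (pc_size pc') h6 h8'; done.
- have := pc_card pc; rewrite (pc_card pc') (pc_size pc) (pc_size pc') h8 h6'; done.
- have zC : inl z \in comp P (inl x) by rewrite (pc_C pc') inE -Ej' mem_nth.
  have [k [hk Ek r1 r2]] := X_idx x pc zC dz.
  have hij2 := Ab_idx pc h8 hi hj Ei Ej dx dy hij.
  have hij3 := Ab_idx pc' h8' hi' hj' Ei' Ej' dx dz hij'.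
  have nki : k != i.
    apply/eqP => E1; subst k.
    have : x = z by apply: inl_inj'; rewrite Ek Ei.
    by move=> E2; rewrite E2 eqxx in nxz.
  case: (eqVneq k j) => [E1|nkj]; first by apply: inl_inj'; rewrite -Ej Ek E1.
  rewrite h8 in r1.
  have k4 : k = 4 by move: r1 r2 nki nkj hij2; clear; lia.
  have j26 : j' = 2 \/ j' = 6 by case: hij3 => [[_ ->]|[_ ->]]; [right|left].
  have [a [b [ha hb' hd]]] := yesN (inl x) pc' h8' j26.
  rewrite Ej' Ek k4 in ha.
  by have := noN pc h8 ha hb'; rewrite ltnNge hd.
Qed.
End M.

From Stdlib Require Import ClassicalEpsilon Classical.

Definition pf (T : Type) (R : T -> T -> Prop) (x : T) : T :=
  epsilon (inhabits x) (fun y => R x y \/ ((~ exists z, R x z) /\ y = x)).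

Lemma pf_spec (T : Type) (R : T -> T -> Prop) x :
  R x (pf R x) \/ ((~ exists z, R x z) /\ pf R x = x).
Proof.
apply: (epsilon_spec (inhabits x) (fun y => R x y \/ ((~ exists z, R x z) /\ y = x))).
case: (classic (exists z, R x z)) => [[z hz]|nz]; first by exists z; left.
by exists x; right.
Qed.

Lemma pf_rel (T : Type) (R : T -> T -> Prop) x y :
  (forall a b c, R a b -> R a c -> b = c) -> R x y -> pf R x = y.
Proof.
move=> fn rxy; case: (pf_spec R x) => [h|[h _]]; first exact: fn h rxy.
by case: h; exists y.
Qed.

Lemma pf_inv (T : Type) (R : T -> T -> Prop) :
  (forall a b, R a b -> R b a) -> (forall a b c, R a b -> R a c -> b = c) ->
  involutive (pf R).
Proof.
move=> sy fn x; case: (pf_spec R x) => [h|[_ E]]; last by rewrite E E.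
by apply: pf_rel => //; apply: sy.
Qed.

Theorem mainTheorem1 (X Y E : finType) (ex : E -> X) (ey : E -> Y) (P : {set E}) :
  biregular34 ex ey ->
  proper_path_factor ex ey P ->
  GP_bipartite ex ey P.
Proof.
move=> hb hp.
pose f1 := pf (R1 ex ey P).
pose f2 := pf (R2 ex ey P).
have s1 := @R1_sym _ _ _ ex ey P.
have s2 := @R2_sym _ _ _ ex ey P.
have fn1 := @R1_fun _ _ _ ex ey P hp.
have fn2 := @R2_fun _ _ _ ex ey P hb hp.
have [c Hc] := color2 (pf_inv s1 fn1) (pf_inv s2 fn2).
exists c => x1 x2 [ne d1 d2 H].
case: H => [ha|hb'|hc].
- have r : R1 ex ey P x1 x2 by split => //; left.
  have E1 := pf_rel fn1 r.
  have [H1 _] := Hc x1; rewrite eq_sym -E1; apply: H1; rewrite E1 eq_sym //.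
- have r : R1 ex ey P x1 x2 by split => //; right.
  have E1 := pf_rel fn1 r.
  have [H1 _] := Hc x1; rewrite eq_sym -E1; apply: H1; rewrite E1 eq_sym //.
- have r : R2 ex ey P x1 x2 by split.
  have E1 := pf_rel fn2 r.
  have [_ H1] := Hc x1; rewrite eq_sym -E1; apply: H1; rewrite E1 eq_sym //.
Qed.
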